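(* Under the Local Regularity Assumption (see context), let $L:=\sup\{\|\zeta\|:\zeta\in\partial f(x),\,x\in\mathcal{X}\cap B_\epsilon(\bar x)\}$, assumed finite and positive, and $\tau:=\mu/L$. Let $x_0\in B_{\epsilon/4}(\bar x)\cap\mathcal{X}$ satisfy $$\mathrm{dist}(x_0,\mathcal{X}^* )\le\min\Big\{\frac{3\epsilon\mu^2}{64L^2},\frac{\mu}{2\rho}\Big\}.$$ Then the iterates $x_k$ of the Polyak subgradient method started at $x_0$ all lie in $B_\epsilon(\bar x)$ and satisfy $$\mathrm{dist}^2(x_{k+1},\mathcal{X}^* )\le\Big(1-\frac{\tau^2}{2}\Big)\mathrm{dist}^2(x_k,\mathcal{X}^* )\quad\text{for all }k\ge0.$$ Moreover, the iterates converge to some $x_\infty\in\mathcal{X}^*$ with $$\|x_k-x_\infty\|\le\frac{16L^3\,\mathrm{dist}(x_0,\mathcal{X}^* )}{3\mu^3}\Big(1-\frac{\tau^2}{2}\Big)^{k/2}\quad\text{for all }k\ge0.$$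
   Context: $\mathbf{E}$ is a Euclidean space with norm $\|\cdot\|$; $B_\epsilon(z)$ is the closed ball of radius $\epsilon$ about $z$; $\mathrm{proj}_{\mathcal{X}}$ is the Euclidean projection. For $f\colon\mathbf{E}\to\mathbb{R}$, $\partial f(x)$ is the (Fréchet) subdifferential: the set of $\xi$ with $f(y)\ge f(x)+\langle\xi,y-x\rangle+o(\|y-x\|)$ as $y\to x$. Local Regularity Assumption: $\mathcal{X}\subset\mathbf{E}$ is nonempty closed convex, $f\colon\mathbf{E}\to\mathbb{R}$ is continuous, $\mathcal{X}^*:=\operatorname{argmin}_{x\in\mathcal{X}}f$ is nonempty, $\bar x\in\mathcal{X}^*$, and $\epsilon,\mu,\rho>0$ satisfy: (local weak convexity) $f(y)\ge f(x)+\langle\zeta,y-x\rangle-\frac\rho2\|y-x\|^2$ for all $x,y\in\mathcal{X}\cap B_\epsilon(\bar x)$ and $\zeta\in\partial f(x)$; (local sharpness) $f(x)-\inf_{\mathcal{X}}f\ge\mu\,\mathrm{dist}(x,\mathcal{X}^* )$ for all $x\in\mathcal{X}\cap B_\epsilon(\bar x)$. Polyak subgradient method: given $x_k$, choose $\zeta_k\in\partial f(x_k)$; if $\zeta_k=0$ set $x_{k+1}=x_k$, otherwise $x_{k+1}=\mathrm{proj}_{\mathcal{X}}\big(x_k-\frac{f(x_k)-\min_{\mathcal{X}}f}{\|\zeta_k\|^2}\zeta_k\big)$. *)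

(* Defs.v *)
(* classical real numbers. E is modelled as R^n = (Fin.t n -> R)
   with the standard Einner product. *)
From Stdlib Require Import Fin Reals Lra Classical ClassicalEpsilon FunctionalExtensionality.
Open Scope R_scope.

Definition vec (n : nat) : Type := Fin.t n -> R.

Definition vadd {n} (x y : vec n) : vec n := fun i => x i + y i.
Definition vsub {n} (x y : vec n) : vec n := fun i => x i - y i.
Definition vscal {n} (a : R) (x : vec n) : vec n := fun i => a * x i.
Definition vzero {n} : vec n := fun _ => 0.

Fixpoint Einner (n : nat) : vec n -> vec n -> R :=
  match n return vec n -> vec n -> R with
  | O => fun _ _ => 0
  | S m => fun x y => x Fin.F1 * y Fin.F1
                      + Einner m (fun i => x (Fin.FS i)) (fun i => y (Fin.FS i))
  end.
Arguments Einner {n} x y.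

Definition Enorm {n} (x : vec n) : R := sqrt (Einner x x).

Definition Eball {n} (z : vec n) (eps : R) (x : vec n) : Prop :=
  Enorm (vsub x z) <= eps.

(* greatest lower bound / infimum (classical choice; 0 if none exists) *)
Definition Eis_glb (A : R -> Prop) (m : R) : Prop :=
  (forall a, A a -> m <= a) /\ (forall b, (forall a, A a -> b <= a) -> b <= m).

Definition EInf (A : R -> Prop) : R :=
  match excluded_middle_informative (exists m, Eis_glb A m) with
  | left h => proj1_sig (constructive_indefinite_description _ h)
  | right _ => 0
  end.

Definition Edist {n} (x : vec n) (S : vec n -> Prop) : R :=
  EInf (fun d => exists y, S y /\ d = Enorm (vsub x y)).

Definition Eclosed_set {n} (X : vec n -> Prop) : Prop :=
  forall x, (forall e, 0 < e -> exists y, X y /\ Enorm (vsub x y) < e) -> X x.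

Definition Econvex_set {n} (X : vec n -> Prop) : Prop :=
  forall x y t, X x -> X y -> 0 <= t <= 1 ->
    X (vadd (vscal t x) (vscal (1 - t) y)).

Definition Econtinuous_fun {n} (f : vec n -> R) : Prop :=
  forall x e, 0 < e -> exists d, 0 < d /\
    forall y, Enorm (vsub y x) < d -> Rabs (f y - f x) < e.

Definition frechet_subgrad {n} (f : vec n -> R) (x xi : vec n) : Prop :=
  forall e, 0 < e -> exists d, 0 < d /\
    forall y, Enorm (vsub y x) <= d ->
      f y >= f x + Einner xi (vsub y x) - e * Enorm (vsub y x).

Definition inf_on {n} (X : vec n -> Prop) (f : vec n -> R) : R :=
  EInf (fun v => exists x, X x /\ v = f x).

Definition argmin_on {n} (X : vec n -> Prop) (f : vec n -> R) (x : vec n) : Prop :=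
  X x /\ forall z, X z -> f x <= f z.

(* Euclidean projection onto X (unique for nonempty closed convex X) *)
Definition Eproj {n} (X : vec n -> Prop) (y : vec n) : vec n :=
  match excluded_middle_informative
          (exists p, X p /\ forall z, X z -> Enorm (vsub y p) <= Enorm (vsub y z)) with
  | left h => proj1_sig (constructive_indefinite_description _ h)
  | right _ => y
  end.

Definition polyak_run {n} (X : vec n -> Prop) (f : vec n -> R)
    (x zeta : nat -> vec n) : Prop :=
  forall k, frechet_subgrad f (x k) (zeta k) /\
    (zeta k = vzero -> x (S k) = x k) /\
    (zeta k <> vzero ->
       x (S k) = Eproj X (vsub (x k)
                   (vscal ((f (x k) - inf_on X f) / (Enorm (zeta k))^2) (zeta k)))).

(* Main.v *)
Require Import Defs.
From Stdlib Require Import Reals Lra Lia Psatz Classical ClassicalEpsilon FunctionalExtensionality.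
Open Scope R_scope.

Lemma Einner_add_l n (u v w : vec n) : Einner (vadd u v) w = Einner u w + Einner v w.
Proof. induction n; simpl. lra. specialize (IHn (fun i => u (Fin.FS i)) (fun i => v (Fin.FS i)) (fun i => w (Fin.FS i))). unfold vadd in *; cbv beta in *. rewrite IHn. ring. Qed.

Lemma Einner_scal_l n a (u w : vec n) : Einner (vscal a u) w = a * Einner u w.
Proof. induction n; simpl. lra. specialize (IHn (fun i => u (Fin.FS i)) (fun i => w (Fin.FS i))). unfold vscal in *; cbv beta in *. rewrite IHn. ring. Qed.

Lemma Einner_sub_l n (u v w : vec n) : Einner (vsub u v) w = Einner u w - Einner v w.
Proof. induction n; simpl. lra. specialize (IHn (fun i => u (Fin.FS i)) (fun i => v (Fin.FS i)) (fun i => w (Fin.FS i))). unfold vsub in *; cbv beta in *. rewrite IHn. ring. Qed.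

Lemma Einner_sym n (u v : vec n) : Einner u v = Einner v u.
Proof. induction n; simpl. lra. rewrite IHn. ring. Qed.

Lemma Einner_zero_l n (w : vec n) : Einner vzero w = 0.
Proof. induction n; simpl. lra. specialize (IHn (fun i => w (Fin.FS i))). unfold vzero in *. rewrite IHn. ring. Qed.

Lemma Einner_pos n (u : vec n) : 0 <= Einner u u.
Proof. induction n; simpl. lra. specialize (IHn (fun i => u (Fin.FS i))). nra. Qed.

Lemma Einner_eq0 n (u : vec n) : Einner u u = 0 -> u = vzero.
Proof.
  intro H. apply functional_extensionality. revert u H. induction n; intros u H i.
  - apply (Fin.case0 (fun i => u i = vzero i) i).
  - simpl in H. pose proof (Einner_pos n (fun i => u (Fin.FS i))).
    assert (h1 : u Fin.F1 = 0) by nra.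
    assert (h2 : Einner (fun i => u (Fin.FS i)) (fun i => u (Fin.FS i)) = 0) by nra.
    apply (Fin.caseS' i (fun i => u i = vzero i)); [exact h1|].
    intro j. exact (IHn _ h2 j).
Qed.

Lemma Enorm_pos n (u : vec n) : 0 <= Enorm u.
Proof. apply sqrt_pos. Qed.

Lemma Enorm_sq n (u : vec n) : Enorm u ^ 2 = Einner u u.
Proof. unfold Enorm. apply pow2_sqrt, Einner_pos. Qed.

Lemma Enorm_zero n : Enorm (@vzero n) = 0.
Proof. unfold Enorm. rewrite Einner_zero_l. apply sqrt_0. Qed.

Lemma Enorm_eq0 n (u : vec n) : Enorm u = 0 -> u = vzero.
Proof. intro H. apply Einner_eq0. rewrite <- Enorm_sq, H. ring. Qed.

Lemma Enorm_le_sq n (u : vec n) r : 0 <= r -> Einner u u <= r ^ 2 -> Enorm u <= r.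
Proof. intros Hr H. unfold Enorm. rewrite <- (sqrt_pow2 r Hr). apply sqrt_le_1_alt. exact H. Qed.

Lemma sq_le_Enorm n (u : vec n) r : 0 <= r -> Enorm u <= r -> Einner u u <= r ^ 2.
Proof. intros Hr H. rewrite <- Enorm_sq. pose proof (Enorm_pos n u). nra. Qed.

Lemma Einner_expand n (u v : vec n) :
  Einner (vsub u v) (vsub u v) = Einner u u - 2 * Einner u v + Einner v v.
Proof. rewrite !Einner_sub_l, (Einner_sym n u (vsub u v)), (Einner_sym n v (vsub u v)), !Einner_sub_l.
  rewrite (Einner_sym n v u). ring. Qed.

Lemma CS n (u v : vec n) : Einner u v <= Enorm u * Enorm v.
Proof.
  destruct (Req_dec (Einner u u) 0) as [H0|H0].
  - apply Einner_eq0 in H0. subst. rewrite Einner_zero_l.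
    pose proof (Enorm_pos n vzero); pose proof (Enorm_pos n v). nra.
  - pose proof (Einner_pos n u). set (A := Einner u u) in *. set (B := Einner u v).
    set (C := Einner v v).
    set (t := B / A).
    pose proof (Einner_pos n (vsub (vscal t u) v)) as Hq.
    rewrite Einner_expand, !Einner_scal_l, (Einner_sym n u (vscal t u)), Einner_scal_l in Hq.
    fold A B C in Hq.
    assert (HA : 0 < A) by lra.
    assert (HB : B * B <= A * C).
    { unfold t in Hq. field_simplify in Hq; [|lra].
      apply Rmult_le_compat_r with (r := A) in Hq; [|lra].
      unfold Rdiv in Hq. rewrite Rmult_assoc, Rinv_l in Hq by lra. nra. }
    pose proof (Enorm_sq n u); pose proof (Enorm_sq n v).
    pose proof (Enorm_pos n u); pose proof (Enorm_pos n v).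
    fold A in H1. fold C in H2.
    destruct (Rle_dec B 0). nra.
    assert (HP : B * B <= (Enorm u * Enorm v) ^ 2) by nra.
    set (P := Enorm u * Enorm v) in *. assert (0 <= P) by (unfold P; nra).
    destruct (Rle_dec B P) as [?|Hn]; [assumption|]. exfalso.
    assert (P * P < B * B) by (apply Rmult_le_0_lt_compat; lra). nra.
Qed.

Lemma vsub_eq_vadd n (a b c : vec n) : vsub a c = vadd (vsub a b) (vsub b c).
Proof. apply functional_extensionality; intro; unfold vsub, vadd; ring. Qed.

Lemma Enorm_add n (u v : vec n) : Enorm (vadd u v) <= Enorm u + Enorm v.
Proof.
  apply Enorm_le_sq. pose proof (Enorm_pos n u); pose proof (Enorm_pos n v); lra.
  rewrite !Einner_add_l, (Einner_sym n u), (Einner_sym n v), !Einner_add_l.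
  pose proof (CS n u v). rewrite (Einner_sym n v u).
  pose proof (Enorm_sq n u); pose proof (Enorm_sq n v). nra.
Qed.

Lemma Enorm_tri n (a b c : vec n) : Enorm (vsub a c) <= Enorm (vsub a b) + Enorm (vsub b c).
Proof. rewrite (vsub_eq_vadd n a b c). apply Enorm_add. Qed.

Lemma Enorm_sym n (a b : vec n) : Enorm (vsub a b) = Enorm (vsub b a).
Proof.
  unfold Enorm. f_equal. replace (vsub b a) with (vscal (-1) (vsub a b)).
  rewrite Einner_scal_l, (Einner_sym n (vsub a b) (vscal _ _)), Einner_scal_l. ring.
  apply functional_extensionality; intro; unfold vsub, vscal; ring.
Qed.

Lemma Enorm_scal n a (u : vec n) : Enorm (vscal a u) = Rabs a * Enorm u.
Proof.
  unfold Enorm. rewrite Einner_scal_l, (Einner_sym n u (vscal _ _)), Einner_scal_l.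
  rewrite <- Rmult_assoc. rewrite sqrt_mult_alt. 2: nra.
  f_equal. replace (a * a) with (Rsqr a) by (unfold Rsqr; ring). apply sqrt_Rsqr_abs.
Qed.

Lemma Enorm_self n (a : vec n) : Enorm (vsub a a) = 0.
Proof. replace (vsub a a) with (@vzero n). apply Enorm_zero.
  apply functional_extensionality; intro; unfold vsub, vzero; ring. Qed.


Lemma glb_exists (A : R -> Prop) : (exists a, A a) -> (exists m, forall a, A a -> m <= a) ->
  exists m, Eis_glb A m.
Proof.
  intros [a Ha] [m Hm].
  destruct (completeness (fun x => A (- x))) as [M [HM1 HM2]].
  - exists (- m). intros x Hx. specialize (Hm _ Hx). lra.
  - exists (- a). rewrite Ropp_involutive. exact Ha.
  - exists (- M). split.
    + intros b Hb. assert (M >= - b) by (apply Rle_ge, HM1; rewrite Ropp_involutive; exact Hb). lra.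
    + intros b Hb. assert (M <= - b). { apply HM2. intros x Hx. specialize (Hb _ Hx). lra. } lra.
Qed.

Lemma glb_unique A m1 m2 : Eis_glb A m1 -> Eis_glb A m2 -> m1 = m2.
Proof. intros [H1 H2] [H3 H4]. apply Rle_antisym; [apply H4, H1 | apply H2, H3]. Qed.

Lemma EInf_spec A : (exists m, Eis_glb A m) -> Eis_glb A (EInf A).
Proof.
  intro H. unfold EInf. destruct (excluded_middle_informative _) as [h|h]; [|contradiction].
  destruct (constructive_indefinite_description _ h) as [m Hm]. exact Hm.
Qed.

Lemma EInf_eq A m : Eis_glb A m -> EInf A = m.
Proof. intro H. apply (glb_unique A). apply EInf_spec. eauto. exact H. Qed.


Lemma Edist_glb {n} (S : vec n -> Prop) (HS : exists y, S y) x : Eis_glb (fun d => exists y, S y /\ d = Enorm (vsub x y)) (Edist x S).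
Proof.
  apply EInf_spec, glb_exists.
  - destruct HS as [y Hy]. eauto.
  - exists 0. intros a [y [_ ->]]. apply Enorm_pos.
Qed.

Lemma Edist_le {n} (S : vec n -> Prop) (HS : exists y, S y) x y : S y -> Edist x S <= Enorm (vsub x y).
Proof. intro Hy. apply (proj1 (Edist_glb S HS x)). eauto. Qed.

Lemma Edist_pos {n} (S : vec n -> Prop) (HS : exists y, S y) x : 0 <= Edist x S.
Proof. apply (proj2 (Edist_glb S HS x)). intros a [y [_ ->]]. apply Enorm_pos. Qed.

Lemma Edist_approx {n} (S : vec n -> Prop) (HS : exists y, S y) x d : 0 < d -> exists y, S y /\ Enorm (vsub x y) < Edist x S + d.
Proof.
  intro Hd. apply NNPP. intro Hn.
  assert (Edist x S + d <= Edist x S); [|lra].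
  apply (proj2 (Edist_glb S HS x)). intros a [y [Hy ->]].
  apply Rnot_lt_le. intro Hl. apply Hn. eauto.
Qed.

Lemma lim_small A B C d0 : 0 < d0 -> (forall d, 0 < d -> d <= d0 -> A <= B + C * d) -> A <= B.
Proof.
  intros Hd0 H. apply Rnot_lt_le. intro Hl.
  set (d := Rmin d0 ((A - B) / (2 * (Rabs C + 1)))).
  assert (Hp : 0 < (A - B) / (2 * (Rabs C + 1))).
  { apply Rdiv_lt_0_compat. lra. pose proof (Rabs_pos C). lra. }
  assert (0 < d) by (unfold d; apply Rmin_glb_lt; lra).
  assert (d <= d0) by apply Rmin_l.
  assert (d <= (A - B) / (2 * (Rabs C + 1))) by apply Rmin_r.
  specialize (H d H0 H1).
  assert (C * d <= Rabs C * d) by (apply Rmult_le_compat_r; [lra| apply Rle_abs]).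
  assert ((Rabs C + 1) * d <= (A - B) / 2).
  { pose proof (Rabs_pos C).
    apply Rmult_le_compat_l with (r := Rabs C + 1) in H2; [|lra].
    replace ((Rabs C + 1) * ((A - B) / (2 * (Rabs C + 1)))) with ((A - B) / 2) in H2 by (field; lra).
    exact H2. }
  pose proof (Rabs_pos C). nra.
Qed.

Definition vcauchy {n} (u : nat -> vec n) :=
  forall e, 0 < e -> exists N, forall i j, (N <= i)%nat -> (N <= j)%nat -> Enorm (vsub (u i) (u j)) < e.
Definition vconv {n} (u : nat -> vec n) (p : vec n) :=
  forall e, 0 < e -> exists N, forall k, (N <= k)%nat -> Enorm (vsub (u k) p) < e.

Lemma sqrt_add_le a b : 0 <= b -> sqrt (a * a + b) <= Rabs a + sqrt b.
Proof.
  intro Hb. pose proof (sqrt_pos b). pose proof (Rabs_pos a).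
  rewrite <- (sqrt_pow2 (Rabs a + sqrt b)) by lra. apply sqrt_le_1_alt.
  pose proof (pow2_sqrt b Hb).
  assert (a * a = Rabs a * Rabs a) by (rewrite <- Rabs_mult; rewrite Rabs_right; nra).
  nra.
Qed.

Lemma head_le n (w : vec (S n)) : Rabs (w Fin.F1) <= Enorm w.
Proof.
  unfold Enorm. simpl. pose proof (Einner_pos n (fun i => w (Fin.FS i))).
  rewrite <- sqrt_Rsqr_abs. apply sqrt_le_1_alt. unfold Rsqr. lra.
Qed.

Lemma tail_le n (w : vec (S n)) : Enorm (fun i => w (Fin.FS i)) <= Enorm w.
Proof.
  unfold Enorm. simpl. apply sqrt_le_1_alt. nra.
Qed.

Lemma vcomplete n (u : nat -> vec n) : vcauchy u -> exists p, vconv u p.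
Proof.
  induction n; intro Hc.
  - exists vzero. intros e He. exists 0%nat. intros k _. unfold Enorm. simpl. rewrite sqrt_0. exact He.
  - set (h := fun k => u k Fin.F1). set (t := fun k => fun i => u k (Fin.FS i)).
    assert (Hh : Cauchy_crit h).
    { intros e He. destruct (Hc e He) as [N HN]. exists N. intros i j Hi Hj.
      specialize (HN i j Hi Hj). unfold Rdist, h.
      pose proof (head_le n (vsub (u i) (u j))). unfold vsub at 1 in H. lra. }
    assert (Ht : vcauchy t).
    { intros e He. destruct (Hc e He) as [N HN]. exists N. intros i j Hi Hj.
      specialize (HN i j Hi Hj). pose proof (tail_le n (vsub (u i) (u j))).
      change (Enorm (fun i0 => vsub (u i) (u j) (Fin.FS i0)) < e). lra. }
    destruct (R_complete h Hh) as [l0 Hl0].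
    destruct (IHn t Ht) as [p' Hp'].
    exists (fun i => Fin.caseS' i (fun _ => R) l0 p').
    intros e He. destruct (Hl0 (e/2)) as [N1 HN1]; [lra|]. destruct (Hp' (e/2)) as [N2 HN2]; [lra|].
    exists (Nat.max N1 N2). intros k Hk.
    specialize (HN1 k ltac:(lia)). specialize (HN2 k ltac:(lia)).
    unfold Enorm. simpl. unfold Rdist, h in HN1. unfold Enorm in HN2.
    pose proof (Einner_pos n (vsub (t k) p')).
    eapply Rle_lt_trans. apply sqrt_add_le. exact H.
    change (Rabs (u k Fin.F1 - l0) + sqrt (Einner (vsub (t k) p') (vsub (t k) p')) < e). lra.
Qed.

Lemma parallelogram n (a b : vec n) :
  Einner (vsub b a) (vsub b a) + Einner (vadd a b) (vadd a b) = 2 * Einner a a + 2 * Einner b b.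
Proof.
  rewrite Einner_expand, !Einner_add_l, (Einner_sym n a (vadd a b)), (Einner_sym n b (vadd a b)), !Einner_add_l.
  rewrite (Einner_sym n b a). ring.
Qed.

Lemma inv_small eta : 0 < eta -> exists N, forall j, (N <= j)%nat -> / INR (S j) < eta.
Proof.
  intro H. destruct (archimed_cor1 eta H) as [N [HN HN0]]. exists N. intros j Hj.
  eapply Rle_lt_trans; [|exact HN]. apply Rinv_le_contravar. apply lt_0_INR; lia.
  apply le_INR; lia.
Qed.

Lemma sq_mono n (a b : vec n) : Enorm a <= Enorm b -> Einner a a <= Einner b b.
Proof. intro H. rewrite <- !Enorm_sq. pose proof (Enorm_pos n a). nra. Qed.

Lemma proj_exists n (X : vec n -> Prop) : (exists x, X x) -> Eclosed_set X -> Econvex_set X ->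
  forall y, exists p, X p /\ forall z, X z -> Enorm (vsub y p) <= Enorm (vsub y z).
Proof.
  intros HXne HXcl HXcv y.
  set (m := Edist y X).
  assert (Hm0 : 0 <= m) by apply (Edist_pos X HXne).
  assert (Hap : forall j : nat, exists z, X z /\ Enorm (vsub y z) < m + / INR (S j)).
  { intro j. apply Edist_approx; auto. apply Rinv_0_lt_compat, lt_0_INR; lia. }
  set (zs := fun j => proj1_sig (constructive_indefinite_description _ (Hap j))).
  assert (Hzs : forall j, X (zs j) /\ Enorm (vsub y (zs j)) < m + / INR (S j)).
  { intro j. unfold zs. destruct (constructive_indefinite_description _ _). exact a. }
  assert (Hlow : forall z, X z -> m <= Enorm (vsub y z)) by (intros; apply Edist_le; auto).
  assert (Hc : vcauchy zs).
  { intros e He. set (eta := Rmin 1 (e * e / (8 * m + 8))).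
    assert (Heta : 0 < eta) by (unfold eta; apply Rmin_glb_lt; [lra| apply Rdiv_lt_0_compat; nra]).
    assert (Heta1 : eta <= 1) by apply Rmin_l.
    assert (Heta2 : eta <= e * e / (8 * m + 8)) by apply Rmin_r.
    destruct (inv_small eta Heta) as [N HN]. exists N. intros i j Hi Hj.
    destruct (Hzs i) as [Xi Hi']. destruct (Hzs j) as [Xj Hj'].
    specialize (HN i Hi) as Ei. specialize (HN j Hj) as Ej.
    assert (Pi : 0 < / INR (S i)) by (apply Rinv_0_lt_compat, lt_0_INR; lia).
    assert (Pj : 0 < / INR (S j)) by (apply Rinv_0_lt_compat, lt_0_INR; lia).
    set (a := vsub y (zs i)). set (b := vsub y (zs j)).
    assert (E1 : vsub (zs i) (zs j) = vsub b a) by (apply functional_extensionality; intro; unfold a, b, vsub; ring).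
    set (mid := vadd (vscal (1/2) (zs i)) (vscal (1 - 1/2) (zs j))).
    assert (Xmid : X mid) by (apply HXcv; auto; lra).
    assert (E2 : vsub y mid = vscal (1/2) (vadd a b)) by (apply functional_extensionality; intro; unfold mid, a, b, vsub, vadd, vscal; cbv beta; field).
    specialize (Hlow mid Xmid). rewrite E2 in Hlow.
    assert (Hq : m * m <= Einner (vscal (1/2) (vadd a b)) (vscal (1/2) (vadd a b))).
    { rewrite <- Enorm_sq. nra. }
    rewrite Einner_scal_l, (Einner_sym n (vadd a b) (vscal _ _)), Einner_scal_l in Hq.
    pose proof (parallelogram n a b) as Hpar.
    assert (Ha : Einner a a <= (m + / INR (S i)) ^ 2) by (apply sq_le_Enorm; [lra| unfold a; destruct (Hzs i); lra]).
    assert (Hb : Einner b b <= (m + / INR (S j)) ^ 2) by (apply sq_le_Enorm; [lra| unfold b; destruct (Hzs j); lra]).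
    rewrite E1.
    assert (Hsq : Einner (vsub b a) (vsub b a) < e * e).
    { assert (Einner (vsub b a) (vsub b a) <= 8 * m * eta + 4 * eta * eta) by nra.
      assert (8 * m * eta + 4 * eta * eta <= (8 * m + 4) * eta) by nra.
      assert ((8 * m + 8) * eta <= e * e).
      { apply Rmult_le_compat_l with (r := 8 * m + 8) in Heta2; [|lra].
        replace ((8 * m + 8) * (e * e / (8 * m + 8))) with (e * e) in Heta2 by (field; lra). lra. }
      nra. }
    pose proof (Enorm_sq n (vsub b a)). pose proof (Enorm_pos n (vsub b a)). nra. }
  destruct (vcomplete n zs Hc) as [p Hp].
  exists p. split.
  - apply HXcl. intros e He. destruct (Hp e He) as [N HN]. exists (zs N). split. apply Hzs.
    rewrite Enorm_sym. apply HN. lia.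
  - intros z Hz. apply Rle_trans with m; [|apply Hlow; auto].
    apply (lim_small _ _ 2 1); [lra|]. intros d Hd Hd1.
    destruct (Hp d Hd) as [N1 HN1]. destruct (inv_small d Hd) as [N2 HN2].
    set (k := Nat.max N1 N2).
    specialize (HN1 k ltac:(lia)). specialize (HN2 k ltac:(lia)).
    pose proof (Enorm_tri n y (zs k) p). destruct (Hzs k). lra.
Qed.

Lemma proj_spec n (X : vec n -> Prop) : (exists x, X x) -> Eclosed_set X -> Econvex_set X ->
  forall y, X (Eproj X y) /\ forall z, X z -> Enorm (vsub (Eproj X y) z) <= Enorm (vsub y z).
Proof.
  intros HXne HXcl HXcv y.
  assert (Hp : exists p, X p /\ forall z, X z -> Enorm (vsub y p) <= Enorm (vsub y z))
    by (apply proj_exists; auto).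
  unfold Eproj. destruct (excluded_middle_informative _) as [h|h]; [|contradiction].
  destruct (constructive_indefinite_description _ h) as [p [Xp Hmin]]. simpl.
  split; [exact Xp|]. intros z Hz.
  assert (Hvi : Einner (vsub y p) (vsub z p) <= 0).
  { apply (lim_small _ 0 (Einner (vsub z p) (vsub z p) / 2) 1); [lra|]. intros t Ht Ht1.
    set (w := vadd (vscal t z) (vscal (1 - t) p)).
    assert (Xw : X w) by (apply HXcv; auto; lra).
    assert (Ew : vsub y w = vsub (vsub y p) (vscal t (vsub z p)))
      by (apply functional_extensionality; intro; unfold w, vsub, vadd, vscal; cbv beta; ring).
    pose proof (sq_mono n _ _ (Hmin w Xw)) as Hs. rewrite Ew, (Einner_expand n (vsub y p) (vscal t (vsub z p))) in Hs.
    rewrite (Einner_sym n (vsub y p) (vscal _ _)), !Einner_scal_l in Hs.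
    rewrite (Einner_sym n (vsub z p) (vscal _ _)), Einner_scal_l in Hs.
    rewrite (Einner_sym n (vsub z p) (vsub y p)) in Hs.
    pose proof (Einner_pos n (vsub z p)). nra. }
  assert (Ez : vsub y z = vsub (vsub y p) (vsub z p))
    by (apply functional_extensionality; intro; unfold vsub; ring).
  rewrite Enorm_sym. apply Enorm_le_sq. apply Enorm_pos.
  rewrite Ez, Enorm_sq, (Einner_expand n (vsub y p) (vsub z p)). pose proof (Einner_pos n (vsub y p)). lra.
Qed.

Lemma inner_flip n (z a b : vec n) : Einner z (vsub a b) = - Einner z (vsub b a).
Proof. rewrite (Einner_sym n z (vsub a b)), (Einner_sym n z (vsub b a)), !Einner_sub_l. ring. Qed.

Lemma inf_eq n (X : vec n -> Prop) f xbar : argmin_on X f xbar -> inf_on X f = f xbar.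
Proof.
  intros [Hx Hm]. unfold inf_on. apply EInf_eq. split.
  - intros a [x [Hx' ->]]. apply Hm; auto.
  - intros b Hb. apply Hb. eauto.
Qed.

Lemma step_lemma n (X : vec n -> Prop) (f : vec n -> R) (xbar : vec n) (eps mu rho L : R)
  (HXne : exists x, X x) (HXcl : Eclosed_set X) (HXcv : Econvex_set X)
  (Hxbar : argmin_on X f xbar)
  (Heps : 0 < eps) (Hmu : 0 < mu) (Hrho : 0 < rho)
  (Hwc : forall x y zeta, X x -> Eball xbar eps x -> X y -> Eball xbar eps y ->
           frechet_subgrad f x zeta ->
           f y >= f x + Einner zeta (vsub y x) - rho / 2 * (Enorm (vsub y x))^2)
  (Hsharp : forall x, X x -> Eball xbar eps x ->
           f x - inf_on X f >= mu * Edist x (argmin_on X f))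
  (HL : is_lub (fun r => exists x zeta, X x /\ Eball xbar eps x /\
                   frechet_subgrad f x zeta /\ r = Enorm zeta) L)
  (HLpos : 0 < L)
  (xk zk xk1 : vec n)
  (Hsub : frechet_subgrad f xk zk)
  (H0 : zk = vzero -> xk1 = xk)
  (H1 : zk <> vzero -> xk1 = Eproj X (vsub xk (vscal ((f xk - inf_on X f) / (Enorm zk)^2) zk)))
  (HXk : X xk)
  (Hr : Enorm (vsub xk xbar) + Edist xk (argmin_on X f) < eps)
  (HD : rho * Edist xk (argmin_on X f) <= mu / 2) :
  X xk1 /\
  (Edist xk1 (argmin_on X f))^2 <= (1 - (mu/L)^2/2) * (Edist xk (argmin_on X f))^2 /\
  Edist xk1 (argmin_on X f) <= Edist xk (argmin_on X f) /\
  Enorm (vsub xk1 xk) <= 4/3 * Edist xk (argmin_on X f) /\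
  (0 < Edist xk (argmin_on X f) -> 3 * mu <= 4 * L) /\
  f xk - inf_on X f <= L * Edist xk (argmin_on X f) + rho/2 * (Edist xk (argmin_on X f))^2.
Proof.
  set (S := argmin_on X f) in *.
  assert (HS : exists y, S y) by (exists xbar; exact Hxbar).
  set (D := Edist xk S) in *. set (D1 := Edist xk1 S).
  assert (Dpos : 0 <= D) by apply (Edist_pos S HS).
  assert (D1pos : 0 <= D1) by apply (Edist_pos S HS).
  set (fs := inf_on X f) in *.
  assert (Hfs : fs = f xbar) by apply (inf_eq n X f xbar Hxbar).
  set (a := f xk - fs) in *.
  assert (Ha0 : 0 <= a) by (unfold a; rewrite Hfs; pose proof (proj2 Hxbar xk HXk); lra).
  set (r := Enorm (vsub xk xbar)) in *.
  assert (Hr0 : 0 <= r) by apply Enorm_pos.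
  assert (Bk : Eball xbar eps xk) by (unfold Eball; fold r; lra).
  assert (Hsh : a >= mu * D) by (apply Hsharp; auto).
  set (N := Enorm zk).
  assert (HN0 : 0 <= N) by apply Enorm_pos.
  assert (HNL : N <= L) by (apply (proj1 HL); exists xk, zk; auto).
  set (d0 := eps - r - D).
  assert (Hd0 : 0 < d0) by (unfold d0; lra).
  assert (Happ : forall dl, 0 < dl -> dl <= d0 -> exists xs, X xs /\ Eball xbar eps xs /\
            f xs = fs /\ Enorm (vsub xk xs) < D + dl /\
            f xs >= f xk + Einner zk (vsub xs xk) - rho / 2 * (Enorm (vsub xk xs))^2).
  { intros dl Hdl Hdl0. destruct (Edist_approx S HS xk dl Hdl) as [xs [Sxs Hxs]]. fold D in Hxs.
    destruct Sxs as [Xxs Hmin].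
    assert (Bxs : Eball xbar eps xs).
    { unfold Eball. pose proof (Enorm_tri n xs xk xbar). rewrite (Enorm_sym n xs xk) in H. fold r in H.
      unfold d0 in Hdl0. lra. }
    exists xs. split; [auto|]. split; [auto|].
    assert (Efs : f xs = fs) by (rewrite Hfs; pose proof (Hmin xbar (proj1 Hxbar)); pose proof (proj2 Hxbar xs Xxs); lra).
    split; [auto|]. split; [auto|].
    rewrite <- (Enorm_sym n xs xk). apply Hwc; auto. }
  assert (Fact1 : a <= N * D + rho / 2 * D^2).
  { apply (lim_small _ _ (N + rho / 2 * (2 * D + d0)) d0 Hd0). intros dl Hdl Hdl0.
    destruct (Happ dl Hdl Hdl0) as [xs [Xxs [Bxs [Efs [Hd Hw]]]]].
    rewrite inner_flip in Hw. pose proof (CS n zk (vsub xk xs)). fold N in H.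
    set (dd := Enorm (vsub xk xs)) in *. assert (0 <= dd) by apply Enorm_pos.
    assert (dd * dd <= (D + dl) * (D + dl)) by nra.
    assert (N * dd <= N * (D + dl)) by nra.
    assert (dl * dl <= dl * d0) by nra.
    assert (Hq : rho / 2 * (dd * dd) <= rho / 2 * ((D + dl) * (D + dl))) by nra.
    assert (Hw' : f xk - fs <= N * dd + rho / 2 * (dd * dd)) by (rewrite <- Efs; nra).
    fold a in Hw'. nra. }
  destruct (Req_dec N 0) as [HN|HN].
  -
    assert (Hz : zk = vzero) by (apply Enorm_eq0; exact HN).
    assert (E : xk1 = xk) by auto. subst xk1.
    assert (HD0 : D = 0).
    { rewrite HN in Fact1. assert (mu * D <= mu / 4 * D) by nra. nra. }
    unfold D1; fold D. rewrite HD0. rewrite Enorm_self. rewrite HD0 in Fact1.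
    repeat split; auto; try lra.
  - assert (Hz : zk <> vzero) by (intro E; apply HN; unfold N; rewrite E; apply Enorm_zero).
    assert (HNp : 0 < N) by lra.
    specialize (H1 Hz). fold fs in H1. fold a in H1. fold N in H1.
    set (s := a / N ^ 2) in *.
    assert (Hs0 : 0 <= s) by (unfold s; apply Rmult_le_pos; [lra| apply Rlt_le, Rinv_0_lt_compat; nra]).
    assert (HsN : s * N ^ 2 = a) by (unfold s; field; lra).
    set (y := vsub xk (vscal s zk)) in *.
    destruct (proj_spec n X HXne HXcl HXcv y) as [Xk1 Hne]. rewrite <- H1 in Xk1, Hne.
    assert (Hmu4 : 0 < D -> 3 * mu <= 4 * N).
    { intro HDp. assert (mu * D <= N * D + mu / 4 * D) by nra.
      assert ((3 * mu - 4 * N) * D <= 0) by nra. nra. }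
    assert (Ha43 : a <= 4 / 3 * N * D).
    { destruct (Req_dec D 0) as [E|E]. rewrite E in *. nra.
      specialize (Hmu4 ltac:(lra)). assert (rho / 2 * D ^ 2 <= N / 3 * D) by nra. nra. }
    assert (Hstep : Enorm (vsub xk1 xk) <= 4 / 3 * D).
    { eapply Rle_trans. apply Hne; auto.
      assert (Ey : vsub y xk = vscal (- s) zk) by (apply functional_extensionality; intro; unfold y, vsub, vscal; ring).
      rewrite Ey, Enorm_scal. fold N. rewrite Rabs_Ropp, Rabs_right by lra.
      assert (s * N = a / N) by (unfold s; field; lra). rewrite H.
      apply Rmult_le_reg_r with N; auto. replace (a / N * N) with a by (field; lra). nra. }
    assert (Hc : D1 ^ 2 <= D ^ 2 * (1 + s * rho) - s * a).
    { apply (lim_small _ _ ((2 * D + d0) * (1 + s * rho)) d0 Hd0). intros dl Hdl Hdl0.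
      destruct (Happ dl Hdl Hdl0) as [xs [Xxs [Bxs [Efs [Hd Hw]]]]].
      rewrite inner_flip in Hw.
      assert (HD1 : D1 <= Enorm (vsub y xs)).
      { eapply Rle_trans. apply (Edist_le S HS). split; [exact Xxs|]. intros z Hz'. rewrite Efs, Hfs. apply (proj2 Hxbar); auto.
        apply Hne; auto. }
      assert (Ey : vsub y xs = vsub (vsub xk xs) (vscal s zk)) by (apply functional_extensionality; intro; unfold y, vsub, vscal; ring).
      rewrite Ey in HD1.
      assert (Hsq : D1 ^ 2 <= Einner (vsub (vsub xk xs) (vscal s zk)) (vsub (vsub xk xs) (vscal s zk))).
      { rewrite <- Enorm_sq. nra. }
      rewrite Einner_expand, (Einner_sym n (vsub xk xs) (vscal s zk)), !Einner_scal_l in Hsq.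
      rewrite (Einner_sym n zk (vscal s zk)), Einner_scal_l in Hsq.
      rewrite <- Enorm_sq in Hsq. fold N in Hsq. rewrite Enorm_sq in Hsq.
      set (dd := Enorm (vsub xk xs)) in *. assert (0 <= dd) by apply Enorm_pos.
      assert (Hip : Einner zk (vsub xk xs) >= a - rho / 2 * dd ^ 2) by (unfold a; lra).
      assert (Hdd2 : dd ^ 2 <= D ^ 2 + dl * (2 * D + d0)) by nra.
      assert (Hzz : Einner zk zk = N ^ 2) by (unfold N; rewrite Enorm_sq; reflexivity).
      rewrite Hzz in Hsq. rewrite <- (Enorm_sq n (vsub xk xs)) in Hsq. fold dd in Hsq.
      assert (s * s * N ^ 2 = s * a) by (rewrite <- HsN; ring).
      assert (s * dd ^ 2 <= s * (D ^ 2 + dl * (2 * D + d0))) by nra.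
      nra. }
    assert (HsrD : s * rho * D ^ 2 <= s * a / 2).
    { assert (rho * D ^ 2 <= a / 2) by nra. nra. }
    assert (Hsa : mu ^ 2 * D ^ 2 / L ^ 2 <= s * a).
    { assert (E1 : s * a = a ^ 2 / N ^ 2) by (unfold s; field; lra). rewrite E1.
      assert (0 <= mu * D) by nra. assert (mu * D <= a) by lra. assert (mu ^ 2 * D ^ 2 <= a ^ 2) by nra.
      apply Rle_trans with (a ^ 2 / L ^ 2).
      - unfold Rdiv. apply Rmult_le_compat_r; [|lra]. apply Rlt_le, Rinv_0_lt_compat. nra.
      - unfold Rdiv. apply Rmult_le_compat_l; [nra|]. apply Rinv_le_contravar; nra. }
    assert (Hsa0 : 0 <= s * a) by nra.
    repeat split; auto.
    + replace ((1 - (mu / L) ^ 2 / 2) * D ^ 2) with (D ^ 2 - mu ^ 2 * D ^ 2 / L ^ 2 / 2) by (field; lra).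
      nra.
    + assert (D1 ^ 2 <= D ^ 2) by nra. nra.
    + intro HDp. specialize (Hmu4 HDp). lra.
    + nra.
Qed.

Lemma sqrt_bound a b c : 0 <= a -> 0 <= b -> a ^ 2 <= c * b ^ 2 -> a <= sqrt c * b.
Proof.
  intros Ha Hb H. destruct (Rle_dec 0 c) as [Hc|Hc].
  - pose proof (pow2_sqrt c Hc). pose proof (sqrt_pos c).
    apply Rnot_lt_le. intro Hl. assert ((sqrt c * b) * (sqrt c * b) < a * a).
    { apply Rmult_le_0_lt_compat; nra. } nra.
  - rewrite sqrt_neg_0 by lra. nra.
Qed.

Lemma pow_le1 q k : 0 <= q -> q <= 1 -> q ^ k <= 1.
Proof. intros H0 H1. induction k; simpl. lra. pose proof (pow_le q k H0). nra. Qed.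

Lemma poly_id t : (1 - t ^ 3 / 4) ^ 2 - (1 - t ^ 2 / 2) = t ^ 2 * ((t ^ 2 - 2) ^ 2 + 4 * (t - 1) ^ 2) / 16.
Proof. field. Qed.

Fixpoint geo (q : R) (k : nat) : R := match k with O => 0 | S k' => geo q k' + q ^ k' end.

Lemma geo_closed q k : q <> 1 -> geo q k = (1 - q ^ k) / (1 - q).
Proof. intro H. induction k; simpl. field. intro; apply H; lra. rewrite IHk. field. intro; apply H; lra. Qed.

Lemma sqrt_pow c k : 0 <= c -> sqrt (c ^ k) = sqrt c ^ k.
Proof. intro H. induction k; simpl. apply sqrt_1. rewrite sqrt_mult; auto. rewrite IHk. reflexivity. apply pow_le; auto. Qed.

Theorem theorem5p5 (n : nat) (X : vec n -> Prop) (f : vec n -> R)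
  (xbar : vec n) (eps mu rho L : R)
  (* Local Regularity Assumption *)
  (HXne : exists x, X x) (HXcl : Eclosed_set X) (HXcv : Econvex_set X)
  (Hfc : Econtinuous_fun f)
  (Hxbar : argmin_on X f xbar)
  (Heps : 0 < eps) (Hmu : 0 < mu) (Hrho : 0 < rho)
  (Hwc : forall x y zeta, X x -> Eball xbar eps x -> X y -> Eball xbar eps y ->
           frechet_subgrad f x zeta ->
           f y >= f x + Einner zeta (vsub y x) - rho / 2 * (Enorm (vsub y x))^2)
  (Hsharp : forall x, X x -> Eball xbar eps x ->
           f x - inf_on X f >= mu * Edist x (argmin_on X f))
  (* L = sup of subgradient norms on X ∩ B_eps(xbar), finite and positive *)
  (HL : is_lub (fun r => exists x zeta, X x /\ Eball xbar eps x /\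
                   frechet_subgrad f x zeta /\ r = Enorm zeta) L)
  (HLpos : 0 < L)
  (* the Polyak iterates *)
  (x zeta : nat -> vec n)
  (Hrun : polyak_run X f x zeta)
  (Hx0 : X (x 0%nat) /\ Eball xbar (eps / 4) (x 0%nat))
  (Hd0 : Edist (x 0%nat) (argmin_on X f)
         <= Rmin (3 * eps * mu ^ 2 / (64 * L ^ 2)) (mu / (2 * rho))) :
  let tau := mu / L in
  (forall k, Eball xbar eps (x k)) /\
  (forall k, (Edist (x (S k)) (argmin_on X f)) ^ 2
             <= (1 - tau ^ 2 / 2) * (Edist (x k) (argmin_on X f)) ^ 2) /\
  (exists xinf, argmin_on X f xinf /\
     (forall e, 0 < e -> exists N, forall k, (N <= k)%nat -> Enorm (vsub (x k) xinf) < e) /\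
     (forall k, Enorm (vsub (x k) xinf)
                <= 16 * L ^ 3 * Edist (x 0%nat) (argmin_on X f) / (3 * mu ^ 3)
                   * sqrt ((1 - tau ^ 2 / 2) ^ k))).
Proof.
  intro tau.
  set (Sm := argmin_on X f) in *.
  assert (HS : exists y, Sm y) by (exists xbar; exact Hxbar).
  set (D := fun k => Edist (x k) Sm).
  set (D0 := D 0%nat).
  assert (Dpos : forall k, 0 <= D k) by (intro; apply (Edist_pos Sm HS)).
  destruct Hx0 as [X0 B0]. unfold Eball in B0.
  set (r0 := Enorm (vsub (x 0%nat) xbar)) in *.
  assert (HD0r : D0 <= r0) by (apply (Edist_le Sm HS); exact Hxbar).
  assert (HD0a : D0 <= 3 * eps * mu ^ 2 / (64 * L ^ 2)) by (eapply Rle_trans; [exact Hd0| apply Rmin_l]).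
  assert (HD0b : D0 <= mu / (2 * rho)) by (eapply Rle_trans; [exact Hd0| apply Rmin_r]).
  assert (HD0c : rho * D0 <= mu / 2).
  { apply Rmult_le_compat_l with (r := rho) in HD0b; [|lra].
    replace (rho * (mu / (2 * rho))) with (mu / 2) in HD0b by (field; lra). exact HD0b. }
  set (c := 1 - tau ^ 2 / 2).
  set (q := sqrt c).
  set (K := 4 / 3 * D0).
  assert (Hq0 : 0 <= q) by apply sqrt_pos.
  assert (Htau : 0 < tau) by (unfold tau; apply Rdiv_lt_0_compat; lra).
  assert (Hc1 : c < 1) by (unfold c; nra).
  assert (Hq1 : q < 1).
  { unfold q. rewrite <- sqrt_1. destruct (Rle_dec 0 c). apply sqrt_lt_1_alt; lra.
    rewrite sqrt_neg_0, sqrt_1 by lra. lra. }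
  assert (STEP : forall k, X (x k) -> Enorm (vsub (x k) xbar) + D k < eps -> rho * D k <= mu / 2 ->
     X (x (S k)) /\ D (S k) ^ 2 <= c * D k ^ 2 /\ D (S k) <= D k /\
     Enorm (vsub (x (S k)) (x k)) <= 4/3 * D k /\ (0 < D k -> 3 * mu <= 4 * L) /\
     f (x k) - inf_on X f <= L * D k + rho / 2 * D k ^ 2).
  { intros k Xk Hr HD. destruct (Hrun k) as [Hsub [Hz0 Hz1]].
    exact (step_lemma n X f xbar eps mu rho L HXne HXcl HXcv Hxbar Heps Hmu Hrho Hwc Hsharp HL HLpos
             (x k) (zeta k) (x (S k)) Hsub Hz0 Hz1 Xk Hr HD). }
  assert (Htau43 : 0 < D0 -> tau <= 4 / 3).
  { intro HD0p. destruct (STEP 0%nat X0 ltac:(fold r0; fold D0; lra) HD0c) as [_ [_ [_ [_ [H _]]]]].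
    specialize (H HD0p). unfold tau. apply Rmult_le_reg_r with L; auto.
    replace (mu / L * L) with mu by (field; lra). lra. }
  assert (Hgeo : forall k, K * geo q k <= eps / 4).
  { intro k. destruct (Req_dec D0 0) as [E|E].
    - unfold K. rewrite E. lra.
    - assert (HD0p : 0 < D0) by (pose proof (Dpos 0%nat); fold D0 in H; lra).
      specialize (Htau43 HD0p).
      assert (Hcp : 0 <= c) by (unfold c; nra).
      assert (Hqt : q <= 1 - tau ^ 2 / 4).
      { unfold q. rewrite <- (sqrt_pow2 (1 - tau ^ 2 / 4)) by nra. apply sqrt_le_1_alt. unfold c. nra. }
      assert (Hg : geo q k <= 1 / (1 - q)).
      { rewrite geo_closed by lra. unfold Rdiv. apply Rmult_le_compat_r.
        apply Rlt_le, Rinv_0_lt_compat; lra. pose proof (pow_le q k Hq0). lra. }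
      assert (Hg2 : 1 / (1 - q) <= 4 / tau ^ 2).
      { apply Rmult_le_reg_r with (1 - q); [lra|]. replace (1 / (1 - q) * (1 - q)) with 1 by (field; lra).
        apply Rmult_le_reg_r with (tau ^ 2 / 4); [nra|].
        replace (4 / tau ^ 2 * (1 - q) * (tau ^ 2 / 4)) with (1 - q) by (field; lra). nra. }
      assert (HK : K * (4 / tau ^ 2) <= eps / 4).
      { unfold K, tau. replace (4 / 3 * D0 * (4 / (mu / L) ^ 2)) with (16 * L ^ 2 / (3 * mu ^ 2) * D0) by (field; lra).
        apply Rle_trans with (16 * L ^ 2 / (3 * mu ^ 2) * (3 * eps * mu ^ 2 / (64 * L ^ 2))).
        apply Rmult_le_compat_l; auto. apply Rlt_le. apply Rdiv_lt_0_compat; nra.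
        right. field. lra. }
      assert (0 <= K) by (unfold K; lra).
      assert (K * geo q k <= K * (4 / tau ^ 2)) by (apply Rmult_le_compat_l; lra). lra. }
  assert (INV : forall k, X (x k) /\ Enorm (vsub (x k) (x 0%nat)) <= K * geo q k /\ D k <= q ^ k * D0).
  { induction k as [|k [Xk [Hk HDk]]].
    - simpl. rewrite Enorm_self. fold D0. split; auto. split; lra.
    - assert (Hrk : Enorm (vsub (x k) xbar) <= eps / 2).
      { pose proof (Enorm_tri n (x k) (x 0%nat) xbar). fold r0 in H. specialize (Hgeo k). lra. }
      assert (HDD0 : D k <= D0).
      { pose proof (pow_le1 q k Hq0 ltac:(lra)). pose proof (Dpos 0%nat). fold D0 in H0. nra. }
      assert (HD0p : 0 <= D0) by apply Dpos.
      destruct (STEP k Xk ltac:(lra) ltac:(nra)) as [Xk1 [Hc [Hle [Hst _]]]].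
      split; [auto|]. split.
      + simpl. pose proof (Enorm_tri n (x (S k)) (x k) (x 0%nat)).
        assert (4 / 3 * D k <= K * q ^ k) by (unfold K; nra). nra.
      + simpl. assert (D (S k) <= q * D k) by (apply sqrt_bound; auto). nra. }
  assert (HX : forall k, Enorm (vsub (x k) xbar) <= eps / 2).
  { intro k. destruct (INV k) as [_ [H _]]. pose proof (Enorm_tri n (x k) (x 0%nat) xbar). fold r0 in H0.
    specialize (Hgeo k). lra. }
  assert (STEP' : forall k, X (x (S k)) /\ D (S k) ^ 2 <= c * D k ^ 2 /\ D (S k) <= D k /\
     Enorm (vsub (x (S k)) (x k)) <= 4/3 * D k /\ (0 < D k -> 3 * mu <= 4 * L) /\
     f (x k) - inf_on X f <= L * D k + rho / 2 * D k ^ 2).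
  { intro k. destruct (INV k) as [Xk [_ HDk]].
    assert (HDD0 : D k <= D0).
    { pose proof (pow_le1 q k Hq0 ltac:(lra)). pose proof (Dpos 0%nat). fold D0 in H0. nra. }
    specialize (HX k). apply STEP; auto; nra. }
  split; [| split].
  - intro k. unfold Eball. specialize (HX k). lra.
  - intro k. apply STEP'.
  - assert (Hfs : inf_on X f = f xbar) by apply (inf_eq n X f xbar Hxbar).
    destruct (Req_dec D0 0) as [E0|E0].
    +
      exists (x 0%nat).
      assert (Hk0 : forall k, Enorm (vsub (x k) (x 0%nat)) <= 0).
      { intro k. destruct (INV k) as [_ [H _]]. unfold K in H. rewrite E0 in H. lra. }
      split; [|split].
      * split; auto. intros z Hz.
        destruct (STEP' 0%nat) as [_ [_ [_ [_ [_ Hf]]]]]. fold D0 in Hf. rewrite E0, Hfs in Hf.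
        pose proof (proj2 Hxbar z Hz). lra.
      * intros e He. exists 0%nat. intros k _. specialize (Hk0 k). lra.
      * intro k. specialize (Hk0 k). change (Edist (x 0%nat) Sm) with D0. rewrite E0.
        match goal with |- _ <= ?r => replace r with 0 by (unfold Rdiv; ring) end.
        exact Hk0.
    + assert (HD0p : 0 < D0) by (pose proof (Dpos 0%nat); fold D0 in H; lra).
      specialize (Htau43 HD0p).
      assert (Hcp : 0 < c) by (unfold c; nra).
      assert (Hqp : 0 < q) by (unfold q; apply sqrt_lt_R0; lra).
      assert (HKp : 0 < K) by (unfold K; lra).
      assert (Hstp : forall j, Enorm (vsub (x (S j)) (x j)) <= K * q ^ j).
      { intro j. destruct (STEP' j) as [_ [_ [_ [H _]]]]. destruct (INV j) as [_ [_ H']].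
        unfold K. nra. }
      assert (Hpair : forall k m, Enorm (vsub (x (k + m)%nat) (x k)) <= K * (q ^ k - q ^ (k + m)) / (1 - q)).
      { intros k m. induction m as [|m IH].
        - rewrite Nat.add_0_r, Enorm_self. replace (K * (q ^ k - q ^ k) / (1 - q)) with 0 by (field; lra). lra.
        - replace (k + S m)%nat with (S (k + m)) by lia.
          pose proof (Enorm_tri n (x (S (k + m))) (x (k + m)%nat) (x k)).
          specialize (Hstp (k + m)%nat).
          replace (K * (q ^ k - q ^ S (k + m)) / (1 - q)) with (K * q ^ (k + m) + K * (q ^ k - q ^ (k + m)) / (1 - q))
            by (simpl; field; lra). lra. }
      assert (Hpair' : forall k m, Enorm (vsub (x (k + m)%nat) (x k)) <= K * q ^ k / (1 - q)).
      { intros k m. eapply Rle_trans. apply Hpair. unfold Rdiv. apply Rmult_le_compat_r.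
        apply Rlt_le, Rinv_0_lt_compat; lra. pose proof (pow_le q (k + m) ltac:(lra)). nra. }
      assert (Hqn : forall y, 0 < y -> exists N, forall k, (N <= k)%nat -> q ^ k < y).
      { intros y Hy. destruct (pow_lt_1_zero q ltac:(rewrite Rabs_right; lra) y Hy) as [N HN].
        exists N. intros k Hk. specialize (HN k Hk). rewrite Rabs_right in HN; auto. apply Rle_ge, pow_le; lra. }
      assert (Hcau : vcauchy x).
      { intros e He. destruct (Hqn (e * (1 - q) / (2 * K))) as [N HN].
        { apply Rdiv_lt_0_compat; nra. }
        exists N. intros i j Hi Hj.
        pose proof (Hpair' N (i - N)%nat) as Pi. pose proof (Hpair' N (j - N)%nat) as Pj.
        replace (N + (i - N))%nat with i in Pi by lia. replace (N + (j - N))%nat with j in Pj by lia.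
        specialize (HN N (le_n N)).
        assert (K * q ^ N / (1 - q) < e / 2).
        { apply Rmult_lt_reg_r with (1 - q); [lra|]. replace (K * q ^ N / (1 - q) * (1 - q)) with (K * q ^ N) by (field; lra).
          apply Rmult_lt_compat_l with (r := K) in HN; auto.
          replace (K * (e * (1 - q) / (2 * K))) with (e / 2 * (1 - q)) in HN by (field; lra). exact HN. }
        pose proof (Enorm_tri n (x i) (x N) (x j)). rewrite (Enorm_sym n (x N) (x j)) in H0. lra. }
      destruct (vcomplete n x Hcau) as [xinf Hconv].
      assert (Hrate : forall k, Enorm (vsub (x k) xinf) <= K * q ^ k / (1 - q)).
      { intro k. apply (lim_small _ _ 1 1); [lra|]. intros d Hd _.
        destruct (Hconv d Hd) as [M HM]. specialize (HM (k + M)%nat ltac:(lia)).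
        pose proof (Enorm_tri n (x k) (x (k + M)%nat) xinf). rewrite (Enorm_sym n (x k) (x (k + M)%nat)) in H.
        specialize (Hpair' k M). lra. }
      exists xinf. split; [|split].
      * assert (Xinf : X xinf).
        { apply HXcl. intros e He. destruct (Hconv e He) as [M HM]. exists (x M). split.
          apply INV. rewrite Enorm_sym. apply HM. lia. }
        assert (Hfi : f xinf <= f xbar).
        { apply (lim_small _ _ 2 1); [lra|]. intros e He _.
          destruct (Hfc xinf e He) as [dl [Hdl Hc]].
          destruct (Hconv dl Hdl) as [M1 HM1].
          destruct (Hqn (e / ((L + mu) * D0))) as [M2 HM2]. { apply Rdiv_lt_0_compat; nra. }
          set (k := Nat.max M1 M2).
          specialize (HM1 k ltac:(lia)). specialize (HM2 k ltac:(lia)).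
          specialize (Hc (x k) HM1). apply Rabs_def2 in Hc.
          destruct (STEP' k) as [_ [_ [_ [_ [_ Hf]]]]]. rewrite Hfs in Hf.
          destruct (INV k) as [_ [_ HDk]].
          assert (HDD0 : D k <= D0).
          { pose proof (pow_le1 q k Hq0 ltac:(lra)). nra. }
          assert (rho / 2 * D k ^ 2 <= mu / 4 * D k) by (pose proof (Dpos k); assert (rho * D k <= mu / 2) by nra; nra).
          assert (HDk2 : D k * ((L + mu) * D0) <= q ^ k * D0 * ((L + mu) * D0)) by (apply Rmult_le_compat_r; nra).
          assert (q ^ k * ((L + mu) * D0) < e).
          { apply Rmult_lt_compat_r with (r := (L + mu) * D0) in HM2; [|nra].
            replace (e / ((L + mu) * D0) * ((L + mu) * D0)) with e in HM2 by (field; nra). exact HM2. }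
          assert ((L + mu / 4) * D k <= (L + mu) * D k) by (pose proof (Dpos k); nra).
          assert ((L + mu) * D k <= q ^ k * ((L + mu) * D0)).
          { assert (0 <= L + mu) by lra. pose proof (pow_le q k Hq0). nra. }
          lra. }
        split; auto. intros z Hz. pose proof (proj2 Hxbar z Hz). lra.
      * exact Hconv.
      * intro k. eapply Rle_trans. apply Hrate.
        change (Edist (x 0%nat) Sm) with D0. fold c. rewrite sqrt_pow by lra. fold q.
        assert (Hqt : q <= 1 - tau ^ 3 / 4).
        { unfold q. assert (0 <= 1 - tau ^ 3 / 4) by nra.
          rewrite <- (sqrt_pow2 (1 - tau ^ 3 / 4)) by auto. apply sqrt_le_1_alt. unfold c.
          pose proof (pow2_ge_0 tau); pose proof (pow2_ge_0 (tau ^ 2 - 2)); pose proof (pow2_ge_0 (tau - 1)).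
          assert (0 <= tau ^ 2 * ((tau ^ 2 - 2) ^ 2 + 4 * (tau - 1) ^ 2)) by (apply Rmult_le_pos; lra).
          assert (E : (1 - tau ^ 3 / 4) ^ 2 - (1 - tau ^ 2 / 2) = tau ^ 2 * ((tau ^ 2 - 2) ^ 2 + 4 * (tau - 1) ^ 2) / 16) by apply poly_id.
          lra. }
        assert (Hinv : 1 / (1 - q) <= 4 * L ^ 3 / mu ^ 3).
        { apply Rmult_le_reg_r with (1 - q); [lra|]. replace (1 / (1 - q) * (1 - q)) with 1 by (field; lra).
          assert (tau ^ 3 = mu ^ 3 / L ^ 3) by (unfold tau; field; lra).
          apply Rmult_le_reg_l with (mu ^ 3 / (4 * L ^ 3)). apply Rdiv_lt_0_compat; [apply pow_lt; lra | pose proof (pow_lt L 3 HLpos); lra].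
          replace (mu ^ 3 / (4 * L ^ 3) * (4 * L ^ 3 / mu ^ 3 * (1 - q))) with (1 - q) by (field; lra).
          replace (mu ^ 3 / (4 * L ^ 3) * 1) with (tau ^ 3 / 4) by (rewrite H; field; lra). lra. }
        replace (K * q ^ k / (1 - q)) with (4 / 3 * D0 * q ^ k * (1 / (1 - q))) by (unfold K; field; lra).
        replace (16 * L ^ 3 * D0 / (3 * mu ^ 3) * q ^ k) with (4 / 3 * D0 * q ^ k * (4 * L ^ 3 / mu ^ 3)) by (field; lra).
        apply Rmult_le_compat_l; auto. pose proof (pow_le q k Hq0). nra.
Qed.
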